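(* Let $n_1,n_2,n^*_1,n^*_2$ be integers with $1\le n_1\le n^*_1\le n^*_2\le n_2$, $n=n_1+n_2$, $n^*=n^*_1+n^*_2$. Let $\psi_1$ be an Archimedean generator with $\phi_1=\psi_1^{-1}$ and $0<\lambda_1\le\lambda_2$. Let $X_{1:n}(n_1,n_2)$ be the minimum of $n$ dependent nonnegative random variables sharing an Archimedean survival copula with generator $\psi_1$, $n_1$ of which have distribution function $x\mapsto F_1(\lambda_1x)$ and $n_2$ of which have distribution function $x\mapsto F_2(\lambda_2x)$; let $X_{1:n^*}(n^*_1,n^*_2)$ be defined analogously with $n^*_1,n^*_2$ in place of $n_1,n_2$ (same $\psi_1$, $F_1,F_2$, $\lambda_1,\lambda_2$). Suppose $F_1(x)\le F_2(x)$ for all $x$. Then $$(n_1,n_2)\succeq_w(n^*_1,n^*_2)\ \Longrightarrow\ X_{1:n}(n_1,n_2)\le_{st}X_{1:n^*}(n^*_1,n^*_2).$$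
   Context: Archimedean generator: a continuous nonincreasing $\psi:[0,\infty)\to[0,1]$ with $\psi(0)=1$, $\psi(\infty)=0$, which is $m$-monotone; $\phi=\psi^{-1}$. $Z_1,\dots,Z_m$ with marginal survival functions $\bar G_i=1-G_i$ share an Archimedean survival copula with generator $\psi$ if $P(Z_1>z_1,\dots,Z_m>z_m)=\psi(\sum_i\phi(\bar G_i(z_i)))$. $F_1,F_2$ are distribution functions of nonnegative random variables. For $\boldsymbol a,\boldsymbol b\in\mathbb R^k$ with increasingly ordered coordinates $a_{(1)}\le\dots\le a_{(k)}$: $\boldsymbol a\succeq_w\boldsymbol b$ means $\sum_{i=l}^ka_{(i)}\ge\sum_{i=l}^kb_{(i)}$ for all $l$. $U\le_{st}V$ means $P(U>x)\le P(V>x)$ for all $x$. *)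

(* Defs.v *)
From HB Require Import structures.
From mathcomp Require Import all_boot all_order all_algebra.
From mathcomp Require Import all_classical all_reals all_analysis.
Set Implicit Arguments. Unset Strict Implicit. Unset Printing Implicit Defensive.
Import Order.TTheory GRing.Theory Num.Theory.
Import numFieldNormedType.Exports.
Local Open Scope classical_set_scope.
Local Open Scope ring_scope.

Section Defs.
Variable R : realType.

Definition convex_on (D : set R) (g : R -> R) : Prop :=
  forall x y t, D x -> D y -> 0 <= t <= 1 ->
    g (t * x + (1 - t) * y) <= t * g x + (1 - t) * g y.

(* d-monotonicity on (0,+oo) (McNeil & Neslehova 2009), d >= 2:
   psi has derivatives up to order d-2 on (0,oo), (-1)^k psi^(k) >= 0
   for k = 0..d-2, and (-1)^(d-2) psi^(d-2) is nonincreasing and convex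
   on (0,oo). *)
Definition d_monotone (d : nat) (psi : R -> R) : Prop :=
  (2 <= d)%N /\
  (forall k x, (k < d - 2)%N -> 0 < x -> derivable (derive1n k psi) x 1) /\
  (forall k x, (k <= d - 2)%N -> 0 < x -> 0 <= (-1) ^+ k * derive1n k psi x) /\
  (forall x y, 0 < x -> x <= y ->
     (-1) ^+ (d - 2) * derive1n (d - 2) psi y <=
     (-1) ^+ (d - 2) * derive1n (d - 2) psi x) /\
  convex_on `]0, +oo[ (fun x => (-1) ^+ (d - 2) * derive1n (d - 2) psi x).

Definition archimedean_generator (m : nat) (psi : R -> R) : Prop :=
  {within `[0, +oo[, continuous psi} /\
  (forall x y, 0 <= x -> x <= y -> psi y <= psi x) /\
  (forall x, 0 <= x -> 0 <= psi x <= 1) /\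
  psi 0 = 1 /\
  psi x @[x --> +oo] --> (0 : R) /\
  d_monotone m psi.

(* phi = psi^{-1}: the (generalized) inverse of psi, extended-real valued,
   phi t = inf {x >= 0 | psi x <= t}  (= +oo when the set is empty). *)
Definition arch_inv (psi : R -> R) (t : R) : \bar R :=
  ereal_inf [set x%:E | x in [set x : R | 0 <= x /\ psi x <= t]].

Definition arch_ext (psi : R -> R) (x : \bar R) : R :=
  match x with
  | r%:E => psi r
  | +oo%E => 0
  | -oo%E => 1
  end.

Definition nonneg_cdf (F : R -> R) : Prop :=
  {homo F : x y / x <= y} /\
  (forall x, F x @[x --> x^'+] --> F x) /\
  (forall x, x < 0 -> F x = 0) /\
  F x @[x --> +oo] --> (1 : R).

Definition arch_survival_copula d (T : measurableType d) (P : probability T R)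
  (m : nat) (Z : 'I_m -> T -> R) (G : 'I_m -> R -> R) (psi : R -> R) : Prop :=
  (forall i, measurable_fun setT (Z i)) /\
  (forall i x, P [set w | Z i w <= x] = (G i x)%:E) /\
  (forall z : 'I_m -> R,
     P [set w | forall i, z i < Z i w] =
     (arch_ext psi (\sum_(i < m) arch_inv psi (1 - G i (z i)))%E)%:E).

Definition min_rv d (T : measurableType d) (m : nat) (Z : 'I_m -> T -> R)
  (w : T) : \bar R :=
  \big[Order.min/+oo%E]_(i < m) (Z i w)%:E.

Definition two_type_df (n1 n2 : nat) (F1 F2 : R -> R) (l1 l2 : R)
  (i : 'I_(n1 + n2)) (x : R) : R :=
  if (i < n1)%N then F1 (l1 * x) else F2 (l2 * x).

(* weak supermajorization a >=_w b on vectors of the same length: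
   sums of the largest entries of a dominate those of b *)
Definition weakly_supmajorizes (a b : seq R) : Prop :=
  size a = size b /\
  forall l : nat,
    \sum_(x <- drop l (sort <=%R a)) x >= \sum_(x <- drop l (sort <=%R b)) x.

Definition st_le d1 d2 (T1 : measurableType d1) (T2 : measurableType d2)
  (P1 : probability T1 R) (P2 : probability T2 R)
  (U : T1 -> \bar R) (V : T2 -> \bar R) : Prop :=
  forall x : R, (P1 [set w | x%:E < U w] <= P2 [set w | x%:E < V w])%E.

End Defs.

(* Main.v *)
Require Import Defs.
From HB Require Import structures.
From mathcomp Require Import all_boot all_order all_algebra.
From mathcomp Require Import all_classical all_reals all_analysis.
From mathcomp Require Import zify.
Import Order.TTheory GRing.Theory Num.Theory.
Local Open Scope ring_scope.
Local Open Scope classical_set_scope.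

Section Aux.
Variable R : realType.
Local Open Scope classical_set_scope.

Lemma lt_min_rv d (T : measurableType d) m (Z : 'I_m -> T -> R) w (x : R) :
  (x%:E < min_rv Z w)%E <-> forall i, x < Z i w.
Proof.
rewrite /min_rv; elim: m Z => [|m IH] Z.
  by rewrite big_ord0; split => [_ [] //|_]; exact: ltry.
rewrite big_ord_recr /= lt_min; split.
  move=> /andP[/(IH (fun j => Z (widen_ord (leqnSn m) j))) H1 H2] i.
  case: (unliftP ord_max i) => [j ->|->].
    have -> : lift ord_max j = widen_ord (leqnSn m) j.
      by apply: val_inj; rewrite /= /bump leqNgt ltn_ord.
    exact: H1.
  by rewrite -lte_fin.
move=> H; apply/andP; split; last by rewrite lte_fin.
by apply/(IH (fun j => Z (widen_ord (leqnSn m) j))) => j.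
Qed.

Lemma arch_inv_ge0 (psi : R -> R) t : (0 <= arch_inv psi t)%E.
Proof.
apply: le_ereal_inf_tmp => _ [y [y0 _] <-]; by rewrite lee_fin.
Qed.

Lemma arch_inv_anti (psi : R -> R) t t' : t <= t' ->
  (arch_inv psi t' <= arch_inv psi t)%E.
Proof.
move=> tt'; apply: ereal_inf_le_tmp => _ [y [y0 py] <-].
exists y => //; split => //; exact: le_trans py tt'.
Qed.

Lemma arch_ext_anti (psi : R -> R) u v :
  (forall x y, 0 <= x -> x <= y -> psi y <= psi x) ->
  (forall x, 0 <= x -> 0 <= psi x <= 1) ->
  (0 <= u)%E -> (u <= v)%E -> arch_ext psi v <= arch_ext psi u.
Proof.
move=> Hm Hb; case: u => [r| |] //; case: v => [s| |] //=.
- rewrite !lee_fin => r0 rs; exact: Hm.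
- by rewrite lee_fin => r0 _; case/andP: (Hb r r0).
Qed.

Lemma enat_ge0 (a : \bar R) n : (0 <= a)%E -> (0 <= (a *+ n)%R)%E.
Proof.
move=> a0; elim: n => [|n IH]; first by rewrite mulr0n.
by rewrite mulrS; apply: adde_ge0.
Qed.

Lemma emuln_le (a : \bar R) m n : (0 <= a)%E -> (m <= n)%N ->
  ((a *+ m)%R <= (a *+ n)%R)%E.
Proof.
move=> a0 mn; rewrite -(subnKC mn) mulrnDr.
by apply: leeDl; apply: enat_ge0.
Qed.

Lemma emuln_leW (a b : \bar R) n : (a <= b)%E -> ((a *+ n)%R <= (b *+ n)%R)%E.
Proof.
move=> ab; elim: n => [|n IH]; first by rewrite !mulr0n.
by rewrite !mulrS; apply: leeD.
Qed.

Lemma sum_two a b (F1 F2 : R -> R) l1 l2 x (f : R -> \bar R) :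
  (\sum_(i < a + b) f (1 - two_type_df F1 F2 l1 l2 i x))%R =
  (f (1 - F1 (l1 * x)) *+ a + f (1 - F2 (l2 * x)) *+ b)%R.
Proof.
rewrite big_split_ord /=.
rewrite (eq_bigr (fun=> f (1 - F1 (l1 * x)))); last first.
  by move=> i _; rewrite /two_type_df /= ltn_ord.
rewrite [X in (_ + X)%R](eq_bigr (fun=> f (1 - F2 (l2 * x)))); last first.
  by move=> i _; rewrite /two_type_df /= ltnNge leq_addr.
by rewrite !sumr_const !card_ord.
Qed.

End Aux.

Theorem theorem3p9 (R : realType) (n1 n2 ns1 ns2 : nat)
  (psi : R -> R) (F1 F2 : R -> R) (l1 l2 : R)
  (d1 d2 : measure_display)
  (T1 : measurableType d1) (P1 : probability T1 R)
  (T2 : measurableType d2) (P2 : probability T2 R)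
  (X : 'I_(n1 + n2) -> T1 -> R) (Y : 'I_(ns1 + ns2) -> T2 -> R) :
  (1 <= n1)%N -> (n1 <= ns1)%N -> (ns1 <= ns2)%N -> (ns2 <= n2)%N ->
  archimedean_generator (n1 + n2) psi ->
  0 < l1 -> l1 <= l2 ->
  nonneg_cdf F1 -> nonneg_cdf F2 ->
  (forall i w, 0 <= X i w) -> (forall j w, 0 <= Y j w) ->
  arch_survival_copula P1 X (two_type_df F1 F2 l1 l2) psi ->
  arch_survival_copula P2 Y (two_type_df F1 F2 l1 l2) psi ->
  (forall x, F1 x <= F2 x) ->
  @weakly_supmajorizes R [:: n1%:R; n2%:R] [:: ns1%:R; ns2%:R] ->
  st_le P1 P2 (min_rv X) (min_rv Y).
Proof.
move=> h1 hn1 hns hns2 [_ [psim [psib _]]] l10 l12 [F1m [_ [F10 _]]]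
  [F2m [_ [F20 _]]] _ _ [_ [_ CX]] [_ [_ CY]] F12 [_ Hmaj] x.
have eX : [set w : T1 | (x%:E < min_rv X w)%E] = [set w : T1 | forall i, (fun=> x) i < X i w].
  by apply/seteqP; split => w /lt_min_rv.
have eY : [set w : T2 | (x%:E < min_rv Y w)%E] = [set w : T2 | forall i, (fun=> x) i < Y i w].
  by apply/seteqP; split => w /lt_min_rv.
rewrite eX eY (CX (fun=> x)) (CY (fun=> x)) lee_fin.
apply: arch_ext_anti => //.
  elim/big_ind: _ => //; first by move=> ? ? ? ?; exact: adde_ge0.
  by move=> i _; exact: arch_inv_ge0.
rewrite !sum_two.
set A := arch_inv psi (1 - F1 (l1 * x)).
set B := arch_inv psi (1 - F2 (l2 * x)).
have AB : (A <= B)%E.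
  apply: arch_inv_anti; rewrite lerD2l lerN2.
  have [x0|x0] := ltP x 0.
    rewrite F10; last by rewrite pmulr_rlt0.
    rewrite F20; last by rewrite pmulr_rlt0 // (lt_le_trans l10 l12).
    by [].
  apply: le_trans (F12 _); apply: F1m; exact: ler_wpM2r.
have B0 : (0 <= B)%E by apply: arch_inv_ge0.
have A0 : (0 <= A)%E by apply: arch_inv_ge0.
have hs : (ns1 + ns2 <= n1 + n2)%N.
  move: (Hmaj 0%N).
  rewrite !drop0 !(perm_big _ (permEl (perm_sort _ _))) !big_cons !big_nil.
  by rewrite /= !addr0 -!natrD ler_nat.
rewrite -(subnKC hn1) -(subnK hns2) !mulrnDr.
rewrite -!addrA; apply: leeD => //; apply: leeD => //.
apply: (@le_trans _ _ ((B *+ (ns1 - n1))%R)); first exact: emuln_leW.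
apply: emuln_le => //.
lia.
Qed.
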